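(* Let $(G,\omega)$ be a weighted digraph without loops and let $V$ be its square-rooted weighted Hashimoto matrix. Then the radius of convergence $r$ of $\sum_{k=0}^\infty t^kp_k(A)$ equals $\rho(V)^{-1}$, where $\rho$ denotes spectral radius and $\rho(V)^{-1}:=\infty$ if $\rho(V)=0$.
   Context: A weighted digraph is a digraph $G=(V(G),E)$ (no loops or multiple edges) with a weight function $\omega:E\to(0,\infty)$. The weight of a walk $(e_1,\dots,e_k)$ (edges $e_r=(v_r,v_{r+1})$) is $\prod_r\omega(e_r)$; a walk is non-backtracking if $v_{r+2}\ne v_r$ for all $r$. $p_k(A)$ is the matrix whose $(i,j)$ entry is the sum of the weights of all non-backtracking walks of length $k$ from $i$ to $j$ ($p_0(A)=I$). $V$ is the $\#E\times\#E$ matrix indexed by edges with $V_{ef}=\sqrt{\omega(e)\omega(f)}$ if $e=(i,j)$, $f=(j,k)$ with $k\ne i$, and $V_{ef}=0$ otherwise. *)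

(* Defs.v *)
From mathcomp Require Import all_boot all_order all_algebra.
From mathcomp Require Import all_classical all_reals all_analysis.
From mathcomp Require Import complex.
Set Implicit Arguments. Unset Strict Implicit. Unset Printing Implicit Defensive.
Import Order.TTheory GRing.Theory Num.Theory.
Import numFieldNormedType.Exports.
Local Open Scope ring_scope.
Local Open Scope classical_set_scope.
Local Open Scope ring_scope.

(* A weighted digraph on a finite vertex type T is given by an edge relation
   G : rel T (G i j means (i,j) is an edge; no multiple edges automatically)
   and a weight function w : T -> T -> R, positive on edges (values off edges
   are irrelevant).  "No loops" is the hypothesis irreflexive G. *)

Definition edges (T : finType) (G : rel T) : {set T * T} :=
  [set e : T * T | G e.1 e.2].

(* p_k(A)_{ij}: sum of the weights of all non-backtracking walks of length k
   from i to j. *)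
Definition pk (R : realType) (T : finType) (G : rel T) (w : T -> T -> R)
    (k : nat) (i j : T) : R :=
  \sum_(s : (k.+1).-tuple T |
          [&& tnth s ord0 == i, tnth s ord_max == j,
              [forall r : 'I_k, G (nth i s r) (nth i s r.+1)] &
              [forall r : 'I_k.-1, nth i s r.+2 != nth i s r]])
    \prod_(r < k) w (nth i s r) (nth i s r.+1).

Definition hashimoto (R : realType) (T : finType) (G : rel T)
    (w : T -> T -> R) : 'M[R]_#|edges G| :=
  \matrix_(a, b)
    let e := enum_val a in let f := enum_val b in
    if (e.2 == f.1) && (f.2 != e.1)
    then Num.sqrt (w e.1 e.2 * w f.1 f.2) else 0.

(* Spectral radius of a real square matrix: the largest modulus of its
   (complex) eigenvalues (0 for a 0x0 matrix). *)
Definition spectral_radius (R : realType) (n : nat) (M : 'M[R]_n) : R :=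
  sup [set ComplexField.Normc.normc z | z in
        [set z : R[i] | eigenvalue (map_mx (fun x => x%:C%C) M) z]]%classic.

Definition conv_radius (R : realType) (T : finType) (P : nat -> T -> T -> R)
    : \bar R :=
  ereal_sup [set x%:E | x in
    [set t : R | 0 <= t /\
       forall i j, cvgn (series (fun k => t ^+ k * P k i j))%R]]%classic.

(* Main.v *)
Require Import Defs.
From mathcomp Require Import all_boot all_order all_algebra.
From mathcomp Require Import all_classical all_reals all_analysis.
From mathcomp Require Import complex.
Set Implicit Arguments. Unset Strict Implicit. Unset Printing Implicit Defensive.
Import Order.TTheory GRing.Theory Num.Theory.
Import numFieldNormedType.Exports.
From mathcomp Require Import ring lra.
Local Open Scope ring_scope.
Local Open Scope complex_scope.
Local Open Scope ring_scope.

Section Lin.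
Variable R : rcfType.
Local Notation C := R[i].
Local Notation normc := ComplexField.Normc.normc.

Lemma normc_ge0 (x : C) : 0 <= normc x.
Proof. by case: x => a b; rewrite /= sqrtr_ge0. Qed.

Lemma normc_sum (I : Type) (r : seq I) (P : pred I) (F : I -> C) :
  normc (\sum_(i <- r | P i) F i) <= \sum_(i <- r | P i) normc (F i).
Proof.
elim/big_rec2: _ => [|i y x _ IH]; first by rewrite ComplexField.Normc.normc0.
by apply: le_trans (le_normcD _ _) _; rewrite lerD2l.
Qed.

Lemma normcX (x : C) k : normc (x ^+ k) = normc x ^+ k.
Proof.
elim: k => [|k IH]; first by rewrite !expr0 ComplexField.Normc.normc1.
by rewrite !exprS ComplexField.Normc.normcM IH.
Qed.

Lemma normc_real (x : R) : normc (x%:C) = `|x|.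
Proof. by rewrite /= expr0n /= addr0 sqrtr_sqr. Qed.

Definition mnorm n m (X : 'M[C]_(n, m)) : R := \sum_i \sum_j normc (X i j).

Lemma mnorm_ge0 n m (X : 'M[C]_(n, m)) : 0 <= mnorm X.
Proof. by apply: sumr_ge0 => i _; apply: sumr_ge0 => j _; apply: normc_ge0. Qed.

Lemma mnormD n m (X Y : 'M[C]_(n, m)) : mnorm (X + Y) <= mnorm X + mnorm Y.
Proof.
rewrite /mnorm -big_split /=; apply: ler_sum => i _.
rewrite -big_split /=; apply: ler_sum => j _; rewrite mxE; exact: le_normcD.
Qed.

Lemma mnormZ n m (z : C) (X : 'M[C]_(n, m)) : mnorm (z *: X) = normc z * mnorm X.
Proof.
rewrite /mnorm big_distrr /=; apply: eq_bigr => i _.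
rewrite big_distrr /=; apply: eq_bigr => j _; by rewrite mxE ComplexField.Normc.normcM.
Qed.

Lemma mnorm_entry n m (X : 'M[C]_(n, m)) i j : normc (X i j) <= mnorm X.
Proof.
rewrite /mnorm (bigD1 i) //= (bigD1 j) //= -addrA lerDl.
apply: addr_ge0; first by apply: sumr_ge0 => k _; apply: normc_ge0.
by apply: sumr_ge0 => k _; apply: sumr_ge0 => l _; apply: normc_ge0.
Qed.

Lemma mnorm0 n m : mnorm (0 : 'M[C]_(n, m)) = 0.
Proof.
rewrite /mnorm big1 // => i _; rewrite big1 // => j _.
by rewrite mxE ComplexField.Normc.normc0.
Qed.

Lemma key n (A : 'M[C]_n) (rho rho' : R) (rs : seq C) :
  0 <= rho -> rho < rho' -> (forall z, z \in rs -> normc z <= rho) ->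
  forall X : 'M[C]_n, X * \prod_(z <- rs) (A - z%:M) = 0 ->
  exists K, 0 <= K /\ forall k, mnorm (X * A ^+ k) <= K * rho' ^+ k.
Proof.
move=> r0 rr'; elim: rs => [|z rs IH] Hz X HX.
  exists 0; split => // k; move: HX; rewrite big_nil mulr1 => ->.
  by rewrite mul0r mnorm0 mul0r.
move: HX; rewrite big_cons mulrA => HY.
have [|K' [K'0 HK']] := IH _ (X * (A - z%:M)) HY.
  by move=> y yr; apply: Hz; rewrite inE yr orbT.
have nz : normc z <= rho by apply: Hz; rewrite inE eqxx.
pose K := mnorm X + K' / (rho' - rho).
have d0 : 0 < rho' - rho by rewrite subr_gt0.
have K0 : 0 <= K by rewrite addr_ge0 ?mnorm_ge0 // divr_ge0 // ltW.
exists K; split => //; elim => [|k IHk].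
  by rewrite expr0 mulr1 mulr1 lerDl divr_ge0 // ltW.
have E : X * A ^+ k.+1 = X * (A - z%:M) * A ^+ k + z *: (X * A ^+ k).
  have cA : GRing.comm (A - z%:M) (A ^+ k).
    apply: commrX; apply: commr_sym; apply: commrB; first exact: commr_refl.
    by rewrite /GRing.comm -!mulmxE scalar_mxC.
  rewrite -mulrA cA mulrA mulrBr -mulrA -exprSr -mulmxE mul_mx_scalar mulmxE.
  by rewrite subrK.
rewrite E; apply: le_trans (mnormD _ _) _; rewrite mnormZ.
have h1 := HK' k.
have h2 : normc z * mnorm (X * A ^+ k) <= rho * (K * rho' ^+ k).
  by apply: ler_pM => //; [apply: normc_ge0 | apply: mnorm_ge0].
apply: le_trans (lerD h1 h2) _.
have rk : 0 <= rho' ^+ k by rewrite exprn_ge0 // ltW // (le_lt_trans r0 rr').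
have eK : K * (rho' - rho) = mnorm X * (rho' - rho) + K'.
  by rewrite /K mulrDl divfK // gt_eqF.
have : K' + rho * K <= K * rho'.
  have : 0 <= mnorm X * (rho' - rho) by rewrite mulr_ge0 ?mnorm_ge0 // ltW.
  lra.
move=> h; have := ler_wpM2r rk h.
by rewrite mulrDl -(mulrA rho) -(mulrA K) -exprS.
Qed.

Lemma growth n (A : 'M[C]_n) (rho rho' : R) : 0 <= rho -> rho < rho' ->
  (forall z, eigenvalue A z -> normc z <= rho) ->
  exists K, 0 <= K /\ forall k a b, normc ((A ^+ k) a b) <= K * rho' ^+ k.
Proof.
move=> r0 rr' Hz; case: n A Hz => [|n'] A Hz.
  by exists 0; split => // k [].
have [rs Hrs] := closed_field_poly_normal (char_poly A).
have lc : lead_coef (char_poly A) = 1 by apply/monicP/char_poly_monic.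
rewrite lc scale1r in Hrs.
have CH := Cayley_Hamilton A.
rewrite Hrs rmorph_prod /= in CH.
have CH' : 1 * \prod_(z <- rs) (A - z%:M) = 0.
  rewrite mul1r -CH; apply: eq_bigr => z _.
  by rewrite rmorphB /= horner_mx_X horner_mx_C.
have [|K [K0 HK]] := key r0 rr' _ CH'.
  by move=> z zr; apply: Hz; rewrite eigenvalue_root_char Hrs root_prod_XsubC.
exists K; split => // k a b; apply: le_trans (HK k).
by rewrite mul1r mnorm_entry.
Qed.

Lemma eig_lower n (A : 'M[C]_n) z : eigenvalue A z ->
  exists b, forall k, normc z ^+ k <= \sum_a normc ((A ^+ k) a b).
Proof.
case/eigenvalueP => v Hv v0.
have Hk k : v *m A ^+ k = z ^+ k *: v.
  elim: k => [|k IH]; first by rewrite !expr0 mulmx1 scale1r.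
  by rewrite exprSr -mulmxE mulmxA IH -scalemxAl Hv scalerA -exprSr.
have [b0 Hb0] : exists b0, v 0 b0 != 0.
  case/boolP: [exists b, v 0 b != 0] => [/existsP [b0 Hb0]|/existsPn H].
    by exists b0.
  case/eqP: v0; apply/matrixP => i j; rewrite (ord1 i) mxE.
  by apply/eqP; move: (H j); rewrite negbK.
pose b := Order.arg_max b0 xpredT (fun b => normc (v 0 b)).
have [bm _ Hmax] : extremum_spec >=%O xpredT (fun b => normc (v 0 b)) b.
  exact: arg_maxP.
exists bm => k.
have vpos : 0 < normc (v 0 bm).
  rewrite lt_def normc_ge0 andbT; apply/eqP => /ComplexField.Normc.eq0_normc H0.
  have := Hmax b0 isT; rewrite H0 ComplexField.Normc.normc0 => H1.
  have : normc (v 0 b0) = 0 by apply/eqP; rewrite eq_le normc_ge0 andbT.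
  by move/ComplexField.Normc.eq0_normc; apply/eqP.
have E : z ^+ k * v 0 bm = \sum_a v 0 a * (A ^+ k) a bm.
  by have := congr1 (fun M : 'rV[C]_n => M 0 bm) (Hk k); rewrite /= !mxE => <-.
rewrite -(ler_pM2r vpos) mulrC -normcX -ComplexField.Normc.normcM mulrC E.
apply: le_trans (normc_sum _ _ _) _; rewrite big_distrl /=.
apply: ler_sum => a _; rewrite ComplexField.Normc.normcM mulrC.
by apply: ler_wpM2l; [apply: normc_ge0 | apply: Hmax].
Qed.

Lemma col_le_mnorm n m (X : 'M[C]_(n, m)) b : \sum_a normc (X a b) <= mnorm X.
Proof.
apply: ler_sum => a _; rewrite (bigD1 b) //= lerDl.
by apply: sumr_ge0 => k _; apply: normc_ge0.
Qed.

End Lin.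

Section Comb.
Variables (R : realType) (T : finType) (G : rel T) (w : T -> T -> R).

Fixpoint wt (v : T) (s : seq T) : R := if s is x :: t then w v x * wt x t else 1.
Fixpoint okw (u v : T) (b : bool) (s : seq T) : bool :=
  if s is x :: t then [&& G v x, b || (x != u) & okw v x false t] else true.
Definition Ssum k u v b j : R :=
  \sum_(t : k.-tuple T | okw u v b t && (last v t == j)) wt v t.

Lemma sum_tuple_cons k (P : pred (k.+1.-tuple T)) (F : k.+1.-tuple T -> R) :
  \sum_(s | P s) F s =
  \sum_x \sum_(t : k.-tuple T | P [tuple of x :: t]) F [tuple of x :: t].
Proof.
rewrite pair_big_dep /=.
rewrite (reindex (fun p : T * k.-tuple T => [tuple of p.1 :: p.2])) /=.
  by apply: eq_bigl => -[x t].
exists (fun s => (thead s, [tuple of behead s])) => [[x t] _|s _] /=.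
  by rewrite theadE; congr pair; apply: val_inj.
by rewrite -tuple_eta.
Qed.

Lemma forall_ordS n (P : pred 'I_n.+1) :
  [forall i, P i] = P ord0 && [forall i : 'I_n, P (lift ord0 i)].
Proof.
apply/forallP/andP => [H|[H0 /forallP H] i]; first by split=> //; apply/forallP.
by case: (unliftP ord0 i) => [j ->|->].
Qed.

Lemma forall_ord0 (P : pred 'I_0) : [forall i, P i] = true.
Proof. by apply/forallP => -[]. Qed.

Definition Cw n (d v : T) (t : seq T) :=
  [forall r : 'I_n, G (nth d (v :: t) r) (nth d (v :: t) r.+1)] &&
  [forall r : 'I_n.-1, nth d (v :: t) r.+2 != nth d (v :: t) r].

Definition Dh (u : T) (t : seq T) := if t is y :: _ then y != u else true.

Lemma Cw_cons n d v x t : size t = n ->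
  Cw n.+1 d v (x :: t) = [&& G v x, Dh v t & Cw n d x t].
Proof.
move=> st; rewrite /Cw forall_ordS /=.
under eq_forallb => i do rewrite add0n.
rewrite -!andbA; congr andb; rewrite andbCA; congr andb.
case: n st => [|n] st.
  by case: t st => // _; rewrite /Dh /= !forall_ord0.
rewrite forall_ordS /=.
by case: t st => [|y t] //= _.
Qed.

Lemma okw_Cw t n d u v : size t = n ->
  okw u v false t = Dh u t && Cw n d v t.
Proof.
elim: t n u v => [|x t IH] [|n] u v //= st.
  by rewrite /Cw !forall_ord0.
case: st => st; rewrite Cw_cons // (IH n) //=.
by case: (G v x); case: (x != u).
Qed.

Lemma okw_Cw_true t n d u v : size t = n ->
  okw u v true t = Cw n d v t.
Proof.
case: t n => [|x t] [|n] //= st.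
  by rewrite /Cw !forall_ord0.
by case: st => st; rewrite Cw_cons // (@okw_Cw t n d) // andbA.
Qed.

Lemma prod_wt t n d v : size t = n ->
  \prod_(r < n) w (nth d (v :: t) r) (nth d (v :: t) r.+1) = wt v t.
Proof.
elim: t n v => [|x t IH] [|n] v //= st; first by rewrite big_ord0.
rewrite big_ord_recl /=; case: st => st; rewrite -(IH n x st).
by congr (_ * _); apply: eq_bigr => i _; rewrite lift0.
Qed.

Lemma pk_Ssum k i j : pk G w k i j = Ssum k i i true j.
Proof.
rewrite /pk sum_tuple_cons (bigD1 i) //= [X in _ + X]big1 ?addr0; last first.
  move=> x /negbTE xi; apply: big_pred0 => t; by rewrite tnth0 xi.
apply: eq_big => t.
  rewrite tnth0 eqxx /= (@okw_Cw_true t k i i i (size_tuple t)) /Cw.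
  have E : nth i (i :: t) k = last i t by rewrite (last_nth i) size_tuple.
  by rewrite (tnth_nth i) /= E andbC -andbA.
by rewrite (@prod_wt t k i i (size_tuple t)).
Qed.

Lemma Ssum0 u v b j : Ssum 0 u v b j = (v == j)%:R.
Proof.
rewrite /Ssum big_mkcond /=.
rewrite (eq_bigr (fun _ => (v == j)%:R)); last first.
  by move=> t _; rewrite (tuple0 t) /=; case: (v == j).
by rewrite sumr_const card_tuple expn0 mulr1n.
Qed.

Lemma SsumS k u v b j : Ssum k.+1 u v b j =
  \sum_x (if G v x && (b || (x != u)) then w v x * Ssum k v x false j else 0).
Proof.
rewrite /Ssum sum_tuple_cons; apply: eq_bigr => x _ /=.
case: ifP => H.
  rewrite big_distrr /=; apply: eq_big => t; first by rewrite andbA H.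
  by [].
apply: big_pred0 => t; by rewrite andbA H.
Qed.

Hypothesis Hw : forall i j, G i j -> 0 < w i j.

Local Notation n := #|edges G|.
Local Notation E a := (@enum_val _ (pred_of_set (edges G)) a).
Definition Vm := hashimoto G w.
Definition sw (a : 'I_n) := Num.sqrt (w (E a).1 (E a).2).

Lemma GE a : G (E a).1 (E a).2.
Proof. by have := enum_valP a; rewrite inE. Qed.

Lemma sw_sq a : sw a * sw a = w (E a).1 (E a).2.
Proof. by rewrite -expr2 sqr_sqrtr // ltW // Hw // GE. Qed.

Lemma sw_gt0 a : 0 < sw a.
Proof. by rewrite sqrtr_gt0 Hw // GE. Qed.

Lemma VmE a b : Vm a b =
  if ((E a).2 == (E b).1) && ((E b).2 != (E a).1) then sw a * sw b else 0.
Proof. by rewrite /Vm /hashimoto mxE /= sqrtrM // ltW // Hw // GE. Qed.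

Lemma sum_edges (F : T * T -> R) :
  \sum_(a : 'I_n) F (E a) = \sum_x \sum_y (if G x y then F (x, y) else 0).
Proof.
rewrite -big_enum_val /= big_mkcond /= pair_big /=.
by apply: eq_bigr => -[x y] _; rewrite inE.
Qed.

Lemma sum_collapse (F : T -> R) x0 :
  \sum_x (if x0 == x then F x else 0) = F x0.
Proof.
rewrite (bigD1 x0) //= eqxx [X in _ + X]big1 ?addr0 // => x.
by rewrite eq_sym => /negbTE ->.
Qed.

Lemma Qlem k a j :
  \sum_b (Vm ^+ k) a b * (sw b * ((E b).2 == j)%:R) =
  sw a * Ssum k (E a).1 (E a).2 false j.
Proof.
elim: k a => [|k IH] a.
  rewrite Ssum0 (bigD1 a) //= [X in _ + X]big1 ?addr0 => [|b ba].
    by rewrite expr0 mxE eqxx mul1r.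
  by rewrite expr0 mxE eq_sym (negbTE ba) mul0r.
rewrite exprS -mulmxE.
under eq_bigr => b _ do rewrite mxE big_distrl /=.
rewrite exchange_big /=.
under eq_bigr => c _ do under eq_bigr => b _ do rewrite -mulrA.
under eq_bigr => c _ do rewrite -big_distrr /= IH VmE.
rewrite SsumS big_distrr /=.
pose F (e : T * T) := if ((E a).2 == e.1) && (e.2 != (E a).1)
  then sw a * (w e.1 e.2 * Ssum k e.1 e.2 false j) else 0.
transitivity (\sum_c F (E c)).
  apply: eq_bigr => c _; rewrite /F; case: ifP => _; last by rewrite mul0r.
  by rewrite -!mulrA (mulrA (sw c)) sw_sq.
rewrite (sum_edges F) /F /= (eq_bigr (fun x => if (E a).2 == x then
   \sum_y (if G x y && (y != (E a).1) then sw a * (w x y * Ssum k x y false j) else 0) else 0)).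
  rewrite sum_collapse; apply: eq_bigr => y _.
  by case: ifP => _; rewrite ?mulr0.
move=> x _; case: eqP => _.
  by apply: eq_bigr => y _; case: (G x y).
by apply: big1 => y _; case: (G x y).
Qed.

Lemma pk_formula k i j : pk G w k.+1 i j =
  \sum_a \sum_b ((E a).1 == i)%:R * sw a * (Vm ^+ k) a b * (sw b * ((E b).2 == j)%:R).
Proof.
under eq_bigr => a _ do under eq_bigr => b _ do rewrite -mulrA.
under eq_bigr => a _ do rewrite -big_distrr /= Qlem -mulrA (mulrA (sw a)) sw_sq.
rewrite pk_Ssum SsumS; symmetry.
pose F (e : T * T) := (e.1 == i)%:R * (w e.1 e.2 * Ssum k e.1 e.2 false j).
transitivity (\sum_c F (E c)); first by [].
rewrite (sum_edges F) /F /= (eq_bigr (fun x => if i == x then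
   \sum_y (if G x y then (w x y * Ssum k x y false j) else 0) else 0)).
  by rewrite sum_collapse; apply: eq_bigr => y _; case: (G i y).
move=> x _; case: (eqVneq i x) => [<-|ix].
  by apply: eq_bigr => y _; case: (G _ y); rewrite ?mul1r.
apply: big1 => y _; case: (G x y) => //.
by rewrite mul0r.
Qed.

Local Notation normc := ComplexField.Normc.normc.
Definition Vc : 'M[R[i]]_n := map_mx (fun x : R => x%:C%C) Vm.

Lemma Vm_ge0 a b : 0 <= Vm a b.
Proof. by rewrite VmE; case: ifP => // _; rewrite mulr_ge0 // ltW // sw_gt0. Qed.

Lemma Vmk_ge0 k a b : 0 <= (Vm ^+ k) a b.
Proof.
elim: k a b => [|k IH] a b; first by rewrite expr0 mxE ler0n.
rewrite exprS -mulmxE mxE; apply: sumr_ge0 => c _.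
by rewrite mulr_ge0 ?Vm_ge0.
Qed.

Lemma Vc_pow k : Vc ^+ k = map_mx (fun x : R => x%:C%C) (Vm ^+ k).
Proof.
elim: k => [|k IH].
  by rewrite !expr0; apply/matrixP => a b; rewrite !mxE; case: (a == b).
rewrite !exprS IH -!mulmxE; apply/matrixP => a b; rewrite !mxE.
rewrite (@rmorph_sum _ _ (real_complex R)) /=; apply: eq_bigr => c _.
by rewrite !mxE rmorphM.
Qed.

Lemma normc_Vc k a b : normc ((Vc ^+ k) a b) = (Vm ^+ k) a b.
Proof. by rewrite Vc_pow mxE normc_real ger0_norm // Vmk_ge0. Qed.

Lemma pk_ge0 k i j : 0 <= pk G w k i j.
Proof.
case: k => [|k]; first by rewrite pk_Ssum Ssum0 ler0n.
rewrite pk_formula; apply: sumr_ge0 => a _; apply: sumr_ge0 => b _.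
by rewrite !mulr_ge0 ?ler0n ?Vmk_ge0 // ltW // sw_gt0.
Qed.

Definition Eset := [set normc z | z in [set z : R[i] | eigenvalue Vc z]]%classic.

Lemma rho_def : spectral_radius Vm = sup Eset.
Proof. by []. Qed.

Lemma Eset_ub : has_ubound Eset.
Proof.
exists (mnorm (Vc ^+ 1)); apply/ubP => x [z Hz <-].
have [b Hb] := eig_lower Hz; have := Hb 1%N; rewrite expr1 => h.
apply: le_trans h _; exact: col_le_mnorm.
Qed.

Lemma eig_le_rho z : eigenvalue Vc z -> normc z <= spectral_radius Vm.
Proof. by move=> Hz; rewrite rho_def; apply: ub_le_sup Eset_ub _ _; exists z. Qed.

Lemma rho_ge0 : 0 <= spectral_radius Vm.
Proof.
case: (pselect (Eset !=set0)%classic) => [[x [z Hz _]]|H].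
  exact: le_trans (normc_ge0 z) (eig_le_rho Hz).
rewrite rho_def (_ : Eset = set0%classic) ?sup0 //.
by apply/seteqP; split => x // Ex; case: H; exists x.
Qed.

Lemma sum_ge_term (I : finType) (F : I -> R) i0 :
  (forall i, 0 <= F i) -> F i0 <= \sum_i F i.
Proof.
move=> H; rewrite (bigD1 i0) //= lerDl; exact: sumr_ge0.
Qed.

Lemma conv_small t : 0 <= t -> t * spectral_radius Vm < 1 ->
  forall i j, cvgn (series (fun k => t ^+ k * pk G w k i j)).
Proof.
move=> t0 trho i j.
set rho := spectral_radius Vm.
have r0 : 0 <= rho := rho_ge0.
have {}trho : t * rho < 1 := trho.
have [rho' [rr' trho']] : exists rho', rho < rho' /\ t * rho' < 1.
  case: (eqVneq t 0) => [->|tn0].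
    by exists (rho + 1); split; [lra | rewrite mul0r].
  have tp : 0 < t by rewrite lt_def tn0 t0.
  have ru : rho < t^-1 by rewrite -(ltr_pM2l tp) mulfV.
  exists ((rho + t^-1) / 2); split; first lra.
  have -> : t * ((rho + t^-1) / 2) = (t * rho + 1) / 2.
    by rewrite mulrA mulrDr mulfV.
  lra.
have [K [K0 HK]] := growth r0 rr' eig_le_rho.
have rho'0 : 0 < rho' by apply: le_lt_trans rr'.
pose S := \sum_(a : 'I_n) \sum_(b : 'I_n) sw a * sw b.
have S0 : 0 <= S.
  by apply: sumr_ge0 => a _; apply: sumr_ge0 => b _; rewrite mulr_ge0 // ltW ?sw_gt0.
pose L := K * S.
have L0 : 0 <= L by rewrite mulr_ge0.
have HL k : pk G w k.+1 i j <= L * rho' ^+ k.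
  rewrite pk_formula.
  apply: (@le_trans _ _ (\sum_(a : 'I_n) \sum_(b : 'I_n) (K * rho' ^+ k) * (sw a * sw b))).
    apply: ler_sum => a _; apply: ler_sum => b _.
    have hv := HK k a b; rewrite normc_Vc in hv.
    have sa := ltW (sw_gt0 a); have sb := ltW (sw_gt0 b).
    have rk : 0 <= rho' ^+ k by rewrite exprn_ge0 // ltW.
    have vk := Vmk_ge0 k a b.
    have rhs0 : 0 <= K * rho' ^+ k * (sw a * sw b) by rewrite !mulr_ge0.
    case: ((E a).1 == i); case: ((E b).2 == j); rewrite /= ?mul0r ?mulr0 ?mul1r ?mulr1 //.
    have -> : K * rho' ^+ k * (sw a * sw b) = sw a * (K * rho' ^+ k) * sw b by ring.
    by rewrite ler_wpM2r // ler_wpM2l.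
  under eq_bigr => a _ do rewrite -big_distrr /=.
  by rewrite -big_distrr /= /L /S mulrAC.
pose M := 1 + L / rho'.
have M0 : 0 <= M by rewrite addr_ge0 // divr_ge0 // ltW.
have q0 : 0 <= t * rho' by rewrite mulr_ge0 // ltW.
apply: (series_le_cvg (v_ := geometric M (t * rho'))).
- by move=> k; rewrite mulr_ge0 ?exprn_ge0 ?pk_ge0.
- by move=> k; rewrite /geometric /= mulr_ge0 ?exprn_ge0.
- case => [|k]; rewrite /geometric /=.
    rewrite !expr0 mul1r mulr1 pk_Ssum Ssum0.
    apply: (@le_trans _ _ 1); first by rewrite lern1 leq_b1.
    by rewrite /M lerDl divr_ge0 // ltW.
  apply: le_trans (ler_wpM2l (exprn_ge0 k.+1 t0) (HL k)) _.
  have LM : L <= M * rho' by rewrite /M mulrDl mul1r divfK ?gt_eqF //; lra.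
  rewrite exprMn.
  have a0 := exprn_ge0 k.+1 t0.
  have c0 : 0 <= rho' ^+ k by rewrite exprn_ge0 // ltW.
  have -> : M * (t ^+ k.+1 * rho' ^+ k.+1) = t ^+ k.+1 * ((M * rho') * rho' ^+ k).
    by rewrite [rho' ^+ k.+1]exprS mulrCA; congr (_ * _); rewrite mulrA.
  by rewrite ler_wpM2l // ler_wpM2r.
- by apply: is_cvg_geometric_series; rewrite ger0_norm.
Qed.

Lemma pk_lower k b :
  sw b * \sum_(a : 'I_n) sw a * (Vm ^+ k) a b <= \sum_i pk G w k.+1 i (E b).2.
Proof.
rewrite [X in _ <= X](eq_bigr _ (fun i _ => pk_formula k i _)).
rewrite exchange_big big_distrr /=; apply: ler_sum => a _.
have t0 i a' b' : 0 <= ((E a').1 == i)%:R * sw a' * (Vm ^+ k) a' b' *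
    (sw b' * ((E b').2 == (E b).2)%:R).
  by rewrite !mulr_ge0 ?ler0n ?Vmk_ge0 // ltW // sw_gt0.
apply: le_trans (sum_ge_term (E a).1 _) => [|i]; last first.
  by apply: sumr_ge0 => b' _; apply: t0.
apply: le_trans (sum_ge_term b _) => [|b']; last exact: t0.
by rewrite !eqxx !mulr1n mul1r mulr1 mulrC lexx.
Qed.

Lemma conv_large t : 0 <= t ->
  (forall i j, cvgn (series (fun k => t ^+ k * pk G w k i j))) ->
  t * spectral_radius Vm <= 1.
Proof.
move=> t0 Hcv; rewrite leNgt; apply/negP => H1.
have tp : 0 < t.
  rewrite lt_def t0 andbT; apply/eqP => t00; move: H1.
  by rewrite t00 mul0r ltr10.
have Htr : t^-1 < sup Eset by rewrite -rho_def -(ltr_pM2l tp) mulfV // gt_eqF.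
have Ene : (Eset !=set0)%classic.
  apply/set0P/negP => /eqP E0; move: H1; rewrite rho_def E0 sup0 mulr0.
  by rewrite ltr10.
have [x [z Hz <-] Hx] := sup_gt Ene Htr.
have [b Hb] := eig_lower Hz.
have [a0 _ Hmin] : extremum_spec <=%O xpredT sw (Order.arg_min b xpredT sw).
  exact: arg_minP.
set m := sw a0.
have m0 : 0 < m := sw_gt0 a0.
have sb0 : 0 < sw b := sw_gt0 b.
set delta := t * m * sw b.
have d0 : 0 < delta by rewrite !mulr_gt0.
have tz : 1 <= t * normc z.
  by apply: ltW; rewrite -(ltr_pM2l tp) mulfV ?gt_eqF // in Hx.
have Hlow k : delta <= \sum_i t ^+ k.+1 * pk G w k.+1 i (E b).2.
  rewrite -big_distrr /=.
  apply: le_trans (ler_wpM2l (exprn_ge0 k.+1 t0) (pk_lower k b)).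
  have s1 : m * \sum_(a : 'I_n) (Vm ^+ k) a b <= \sum_(a : 'I_n) sw a * (Vm ^+ k) a b.
    rewrite big_distrr /=; apply: ler_sum => a _.
    by rewrite ler_wpM2r ?Vmk_ge0 // Hmin.
  have s2 : normc z ^+ k <= \sum_(a : 'I_n) (Vm ^+ k) a b.
    by apply: le_trans (Hb k) _; under eq_bigr => a _ do rewrite normc_Vc.
  have s3 : 1 <= (t * normc z) ^+ k by rewrite exprn_ege1.
  have e1 : t ^+ k.+1 * (sw b * (m * normc z ^+ k)) = delta * (t * normc z) ^+ k.
    by rewrite /delta exprMn exprS; ring.
  apply: (@le_trans _ _ (t ^+ k.+1 * (sw b * (m * normc z ^+ k)))).
    rewrite e1 -{1}(mulr1 delta); apply: ler_wpM2l; [exact: ltW d0 | exact: s3].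
  apply: ler_wpM2l; first exact: exprn_ge0.
  apply: ler_wpM2l; first exact: ltW sb0.
  apply: le_trans s1; apply: ler_wpM2l; [exact: ltW m0 | exact: s2].
pose eps := delta / (#|T|%:R + 1).
have eps0 : 0 < eps by rewrite divr_gt0 // ltr_wpDl.
have Hnear : \forall k \near \oo%classic, forall i, `|t ^+ k * pk G w k i (E b).2| < eps.
  apply: filter_forall => i.
  have H := cvgr0_norm_lt _ (cvg_series_cvg_0 (Hcv i (E b).2)) eps eps0.
  exact: H.
case: Hnear => N _ HN.
have := Hlow N; apply/negP; rewrite -ltNge.
apply: (@le_lt_trans _ _ (\sum_(i : T) eps)).
  apply: ler_sum => i _; apply: le_trans (ler_norm _) _.
  exact: ltW (HN N.+1 (leqnSn N) i).
rewrite sumr_const -mulr_natl /eps mulrC -mulrA gtr_pMr //.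
rewrite mulrC ltr_pdivrMr ?ltr_wpDl // mul1r; apply: (@le_lt_trans _ _ #|T|%:R); first by rewrite ler_nat max_card.
by rewrite ltrDl.
Qed.

End Comb.
Theorem theorem5p2 (R : realType) (T : finType) (G : rel T)
    (w : T -> T -> R) (Hloop : irreflexive G)
    (Hw : forall i j, G i j -> 0 < w i j) :
  conv_radius (pk G w) =
    if spectral_radius (hashimoto G w) == 0 then +oo%E
    else ((spectral_radius (hashimoto G w))^-1)%:E.
Proof.
have r0 : 0 <= spectral_radius (hashimoto G w) := rho_ge0 G w.
have Hs := @conv_small R T G w Hw.
have Hl := @conv_large R T G w Hw.
rewrite /Vm in r0 Hs Hl.
set rho := spectral_radius (hashimoto G w) in r0 Hs Hl *.
have memS t : 0 <= t -> t * rho < 1 -> (t%:E <= conv_radius (pk G w))%E.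
  move=> t0 tr; rewrite /conv_radius; apply: ereal_sup_ubound; exists t => //.
  by split => //; apply: Hs.
have m0 := memS 0 (lexx 0); rewrite mul0r ltr01 in m0.
have {}m0 := m0 isT.
case: eqP => [rz|rnz].
  case E : (conv_radius (pk G w)) => [r| |] //.
    have h : 0 <= `|r| + 1 by rewrite addr_ge0.
    have h1 : (`|r| + 1) * rho < 1 by rewrite rz mulr0 ltr01.
    exfalso; have := memS _ h h1; rewrite E lee_fin => H2.
    have : r <= `|r| by apply: ler_norm.
    lra.
  by rewrite E in m0.
have rp : 0 < rho by rewrite lt_def r0 andbT; apply/eqP.
apply/eqP; rewrite eq_le; apply/andP; split.
  rewrite /conv_radius; apply: ge_ereal_sup => _ [t [t0 Ht] <-].
  rewrite lee_fin -div1r ler_pdivlMr //; exact: Hl.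
case E : (conv_radius (pk G w)) => [r| |] //; last by rewrite E in m0.
  rewrite E lee_fin in m0.
  rewrite lee_fin leNgt; apply/negP => Hr.
  have ri : r * rho < 1 by rewrite -ltr_pdivlMr // div1r.
  have h0 : 0 <= (r + rho^-1) / 2 by rewrite divr_ge0 // addr_ge0 // invr_ge0.
  have h1 : (r + rho^-1) / 2 * rho < 1.
    rewrite mulrAC mulrDl mulVf ?gt_eqF //; lra.
  have := memS _ h0 h1; rewrite E lee_fin.
  lra.
by rewrite leey.
Qed.
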